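(* Let $K$ be an infinite subset of $\mathbb N$. Then there is an unbounded, concave and slowly varying modulus $f\colon[0,\infty)\to[0,\infty)$ such that $d^f(K)=1$.
   Context: A modulus is a function $f\colon[0,\infty)\to[0,\infty)$ such that $f(x)=0$ iff $x=0$, $f(x+y)\le f(x)+f(y)$ for all $x,y\ge0$, $f$ is increasing, and $f$ is continuous. A modulus $f$ is slowly varying if $\lim_{x\to\infty}\frac{f(ax)}{f(x)}=1$ for every $a>0$. For an unbounded modulus $f$ and $K\subseteq\mathbb N$, the $f$-density is $d^f(K)=\lim_{n\to\infty}\frac{f(|\{k\le n:k\in K\}|)}{f(n)}$ (when the limit exists). *)

(* Defs.v *)
From Stdlib Require Import Reals.
From Coquelicot Require Import Coquelicot.
Open Scope R_scope.

(* A modulus f : [0,oo) -> [0,oo), represented as f : R -> R whose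
   values outside [0,oo) are irrelevant. *)
Definition is_modulus (f : R -> R) : Prop :=
  (forall x, 0 <= x -> 0 <= f x) /\
  (forall x, 0 <= x -> (f x = 0 <-> x = 0)) /\
  (forall x y, 0 <= x -> 0 <= y -> f (x + y) <= f x + f y) /\
  (forall x y, 0 <= x -> x < y -> f x < f y) /\
  (forall x, 0 <= x ->
     filterlim f (within (fun y => 0 <= y) (locally x)) (locally (f x))).

Definition unbounded_on_nonneg (f : R -> R) : Prop :=
  forall M, exists x, 0 <= x /\ M < f x.

Definition concave_on_nonneg (f : R -> R) : Prop :=
  forall x y t, 0 <= x -> 0 <= y -> 0 <= t <= 1 ->
    t * f x + (1 - t) * f y <= f (t * x + (1 - t) * y).

Definition slowly_varying (f : R -> R) : Prop :=
  forall a, 0 < a -> is_lim (fun x => f (a * x) / f x) p_infty 1.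

Fixpoint count_upto (K : nat -> bool) (n : nat) : nat :=
  match n with
  | O => if K O then 1%nat else 0%nat
  | S m => (count_upto K m + (if K (S m) then 1 else 0))%nat
  end.

Definition f_density_is (f : R -> R) (K : nat -> bool) (l : R) : Prop :=
  is_lim_seq (fun n => f (INR (count_upto K n)) / f (INR n)) l.

Definition infinite_set (K : nat -> bool) : Prop :=
  forall N, exists k, (N <= k)%nat /\ K k = true.

(* Main.v *)
Require Import Defs.
From Stdlib Require Import Reals ZArith Lra Lia ClassicalEpsilon.
From Coquelicot Require Import Coquelicot.
Open Scope R_scope.

Lemma up_nat_ge (t : R) : t <= INR (Z.to_nat (up t)).
Proof.
  destruct (archimed t) as [H1 _].
  destruct (Z.lt_ge_cases (up t) 0) as [Hl|Hl].
  - replace (Z.to_nat (up t)) with 0%nat by lia. simpl. apply IZR_lt in Hl. lra.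
  - rewrite INR_IZR_INZ, Z2Nat.id by lia. lra.
Qed.

Definition Jok (J : nat -> nat) := J 0%nat = 0%nat /\ forall i, (2 * J i + 1 <= J (S i))%nat.
Definition Lg (J : nat -> nat) i := INR (J (S i)) - INR (J i).
Definition sg J i := / Lg J i.
Definition Bp (J : nat -> nat) i := INR (J (S i)).
Fixpoint G J n t := match n with O => 0 | S m => G J m t + (sg J m - sg J (S m)) * Rmin t (Bp J m) end.
Definition H J n t := G J n t + sg J n * t.
Definition hh J t := H J (Z.to_nat (up t)) t.

Lemma J_ge J (HJ : Jok J) i : (i <= J i)%nat.
Proof. destruct HJ as [H0 HS]. induction i; [lia|]. specialize (HS i). lia. Qed.

Lemma J_mono J (HJ : Jok J) i k : (i <= k)%nat -> (J i <= J k)%nat.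
Proof. destruct HJ as [H0 HS]. induction 1; [lia|]. specialize (HS m). lia. Qed.

Lemma J_smono J (HJ : Jok J) i k : (i < k)%nat -> (J i < J k)%nat.
Proof. intros H. pose proof (J_mono J HJ (S i) k H). destruct HJ as [_ HS]. specialize (HS i). lia. Qed.

Lemma Lg_ge1 J (HJ : Jok J) i : 1 <= Lg J i.
Proof. unfold Lg. destruct HJ as [_ HS]. specialize (HS i).
  rewrite <- minus_INR by lia. replace 1 with (INR 1) by reflexivity. apply le_INR. lia. Qed.

Lemma Lg_mono J (HJ : Jok J) i : Lg J i <= Lg J (S i).
Proof. unfold Lg. pose proof (proj2 HJ (S i)). pose proof (proj2 HJ i).
  rewrite <- !minus_INR by lia. apply le_INR. lia. Qed.

Lemma sg_pos J (HJ : Jok J) i : 0 < sg J i.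
Proof. unfold sg. pose proof (Lg_ge1 J HJ i). apply Rinv_0_lt_compat. lra. Qed.

Lemma sg_dec J (HJ : Jok J) i : sg J (S i) <= sg J i.
Proof. unfold sg. pose proof (Lg_ge1 J HJ i). pose proof (Lg_mono J HJ i).
  apply Rinv_le_contravar; lra. Qed.

Lemma sg_le0 J (HJ : Jok J) i : sg J i <= sg J 0.
Proof. induction i; [lra|]. pose proof (sg_dec J HJ i). lra. Qed.

Lemma Bp_mono J (HJ : Jok J) i k : (i <= k)%nat -> Bp J i <= Bp J k.
Proof. intros. unfold Bp. apply le_INR. apply J_mono; auto. lia. Qed.

Lemma Bp_ge J (HJ : Jok J) i : INR i <= Bp J i.
Proof. unfold Bp. apply le_INR. pose proof (J_ge J HJ (S i)). lia. Qed.

Lemma H_step J (HJ : Jok J) n t : t <= Bp J n -> H J (S n) t = H J n t.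
Proof. intros Ht. unfold H. simpl. rewrite Rmin_left by lra. ring. Qed.

Lemma H_stable J (HJ : Jok J) n m t : t <= Bp J n -> (n <= m)%nat -> H J m t = H J n t.
Proof. intros Ht Hm. induction Hm; [reflexivity|].
  rewrite H_step; auto. pose proof (Bp_mono J HJ n m Hm). lra. Qed.

Lemma h_eq J (HJ : Jok J) n t : t <= Bp J n -> hh J t = H J n t.
Proof. intros Ht. unfold hh.
  set (N0 := Z.to_nat (up t)).
  assert (t <= Bp J N0) by (pose proof (up_nat_ge t); pose proof (Bp_ge J HJ N0); unfold N0 in *; lra).
  rewrite <- (H_stable J HJ N0 (Nat.max N0 n) t) by (auto; lia).
  rewrite <- (H_stable J HJ n (Nat.max N0 n) t) by (auto; lia). reflexivity. Qed.

Lemma ex_n J (HJ : Jok J) t : exists n, t <= Bp J n.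
Proof. exists (Z.to_nat (up t)). pose proof (up_nat_ge t). pose proof (Bp_ge J HJ (Z.to_nat (up t))). lra. Qed.

Lemma Rmin_diff x y B : x <= y -> 0 <= Rmin y B - Rmin x B <= y - x.
Proof. intros. unfold Rmin. destruct (Rle_dec y B), (Rle_dec x B); lra. Qed.

Lemma G_lip J (HJ : Jok J) n x y : x <= y -> 0 <= G J n y - G J n x <= (sg J 0 - sg J n) * (y - x).
Proof. intros Hxy. induction n; simpl; [lra|].
  pose proof (Rmin_diff x y (Bp J n) Hxy). pose proof (sg_dec J HJ n).
  set (d := Rmin y (Bp J n) - Rmin x (Bp J n)) in *.
  assert (0 <= (sg J n - sg J (S n)) * d) by (apply Rmult_le_pos; lra).
  assert ((sg J n - sg J (S n)) * d <= (sg J n - sg J (S n)) * (y - x)) by (apply Rmult_le_compat_l; lra).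
  replace (G J n y + (sg J n - sg J (S n)) * Rmin y (Bp J n) -
     (G J n x + (sg J n - sg J (S n)) * Rmin x (Bp J n))) with (G J n y - G J n x + (sg J n - sg J (S n)) * d) by (unfold d; ring).
  replace ((sg J 0 - sg J (S n)) * (y - x)) with ((sg J 0 - sg J n) * (y - x) + (sg J n - sg J (S n)) * (y - x)) by ring.
  lra. Qed.

Lemma H_lip J (HJ : Jok J) n x y : x <= y -> sg J n * (y - x) <= H J n y - H J n x <= sg J 0 * (y - x).
Proof. intros. pose proof (G_lip J HJ n x y H0). unfold H. nra. Qed.

Lemma h_lip J (HJ : Jok J) x y : x <= y -> 0 <= hh J y - hh J x <= sg J 0 * (y - x).
Proof. intros Hxy. destruct (ex_n J HJ y) as [n Hn].
  rewrite (h_eq J HJ n y), (h_eq J HJ n x) by lra.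
  pose proof (H_lip J HJ n x y Hxy). pose proof (sg_pos J HJ n). nra. Qed.

Lemma h_strict J (HJ : Jok J) x y : x < y -> hh J x < hh J y.
Proof. intros Hxy. destruct (ex_n J HJ y) as [n Hn].
  rewrite (h_eq J HJ n y), (h_eq J HJ n x) by lra.
  pose proof (H_lip J HJ n x y (Rlt_le _ _ Hxy)). pose proof (sg_pos J HJ n).
  assert (0 < sg J n * (y - x)) by (apply Rmult_lt_0_compat; lra). lra. Qed.

Lemma Rmin_conc x y t B : 0 <= t <= 1 -> t * Rmin x B + (1 - t) * Rmin y B <= Rmin (t * x + (1 - t) * y) B.
Proof. intros. unfold Rmin. destruct (Rle_dec x B), (Rle_dec y B), (Rle_dec (t * x + (1 - t) * y) B); nra. Qed.

Lemma G_conc J (HJ : Jok J) n x y t : 0 <= t <= 1 -> t * G J n x + (1 - t) * G J n y <= G J n (t * x + (1 - t) * y).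
Proof. intros Ht. induction n; simpl; [lra|].
  pose proof (Rmin_conc x y t (Bp J n) Ht). pose proof (sg_dec J HJ n).
  set (a := sg J n - sg J (S n)) in *.
  assert (a * (t * Rmin x (Bp J n) + (1 - t) * Rmin y (Bp J n)) <= a * Rmin (t * x + (1 - t) * y) (Bp J n)) by (apply Rmult_le_compat_l; unfold a; lra).
  replace (t * (G J n x + a * Rmin x (Bp J n)) + (1 - t) * (G J n y + a * Rmin y (Bp J n))) with
   ((t * G J n x + (1 - t) * G J n y) + a * (t * Rmin x (Bp J n) + (1 - t) * Rmin y (Bp J n))) by ring.
  lra. Qed.

Lemma h_conc J (HJ : Jok J) x y t : 0 <= t <= 1 -> t * hh J x + (1 - t) * hh J y <= hh J (t * x + (1 - t) * y).
Proof. intros Ht. destruct (ex_n J HJ (Rmax x y)) as [n Hn].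
  pose proof (Rmax_l x y). pose proof (Rmax_r x y).
  rewrite (h_eq J HJ n x), (h_eq J HJ n y), (h_eq J HJ n (t * x + (1 - t) * y)) by nra.
  unfold H. pose proof (G_conc J HJ n x y t Ht). nra. Qed.

Lemma G_0 J (HJ : Jok J) n : G J n 0 = 0.
Proof. induction n; simpl; auto. rewrite IHn. rewrite Rmin_left. ring.
  unfold Bp. apply pos_INR. Qed.

Lemma h_0 J (HJ : Jok J) : hh J 0 = 0.
Proof. rewrite (h_eq J HJ 0 0). unfold H. rewrite G_0; auto. ring. unfold Bp. apply pos_INR. Qed.

Lemma G_flat J (HJ : Jok J) n x y : (forall k, (k < n)%nat -> Bp J k <= x /\ Bp J k <= y) -> G J n x = G J n y.
Proof. induction n; intros Hk; simpl; auto.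
  rewrite IHn by (intros; apply Hk; lia). destruct (Hk n) as [A B]; [lia|].
  rewrite !Rmin_right by lra. ring. Qed.

Lemma h_block J (HJ : Jok J) i : hh J (INR (J (S i))) - hh J (INR (J i)) = 1.
Proof.
  assert (Hle : INR (J i) <= INR (J (S i))) by (apply le_INR; apply J_mono; auto).
  rewrite (h_eq J HJ i (INR (J (S i)))), (h_eq J HJ i (INR (J i))) by (unfold Bp; lra).
  unfold H. rewrite (G_flat J HJ i (INR (J (S i))) (INR (J i))).
  - unfold sg, Lg. field. pose proof (Lg_ge1 J HJ i). unfold Lg in *. lra.
  - intros k Hk. unfold Bp. split; apply le_INR; apply J_mono; auto; lia.
Qed.

Lemma h_J J (HJ : Jok J) i : hh J (INR (J i)) = INR i.
Proof. induction i.
  - rewrite (proj1 HJ). simpl. apply h_0; auto.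
  - pose proof (h_block J HJ i). rewrite S_INR. lra. Qed.

Definition ff J x := hh J (ln (1 + x)).

Lemma ln_le_m1 w : 0 < w -> ln w <= w - 1.
Proof. intros. pose proof (exp_ineq1_le (w - 1)). rewrite <- (ln_exp (w - 1)).
  apply ln_le; lra. Qed.

Lemma ln1p_lip x y : 0 <= x <= y -> 0 <= ln (1 + y) - ln (1 + x) <= y - x.
Proof. intros. split.
  - pose proof (ln_le (1 + x) (1 + y)). lra.
  - rewrite <- ln_div by lra. pose proof (ln_le_m1 ((1 + y) / (1 + x))).
    assert (0 < (1 + y) / (1 + x)) by (apply Rdiv_lt_0_compat; lra).
    assert ((1 + y) / (1 + x) - 1 <= y - x).
    { replace ((1 + y) / (1 + x) - 1) with ((y - x) / (1 + x)) by (field; lra).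
      apply Rmult_le_reg_r with (1 + x); [lra|]. unfold Rdiv. rewrite Rmult_assoc, Rinv_l by lra. nra. }
    lra. Qed.

Lemma ln1p_nonneg x : 0 <= x -> 0 <= ln (1 + x).
Proof. intros. rewrite <- ln_1. apply ln_le; lra. Qed.

Lemma ln_conc x y t : 0 <= x -> 0 <= y -> 0 <= t <= 1 ->
  t * ln (1 + x) + (1 - t) * ln (1 + y) <= ln (1 + (t * x + (1 - t) * y)).
Proof. intros Hx Hy Ht. set (m := 1 + (t * x + (1 - t) * y)).
  assert (Hm : 1 <= m) by (unfold m; nra).
  assert (A : forall z, 0 < z -> ln z <= ln m + z / m - 1).
  { intros z Hz. assert (Q : 0 < z / m) by (apply Rdiv_lt_0_compat; lra).
    pose proof (ln_le_m1 (z / m) Q) as W. rewrite ln_div in W by lra. lra. }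
  pose proof (A (1 + x) ltac:(lra)). pose proof (A (1 + y) ltac:(lra)).
  assert (E : t * ((1 + x) / m) + (1 - t) * ((1 + y) / m) = 1) by (unfold m in *; field; lra).
  nra. Qed.

Lemma f_lip J (HJ : Jok J) x y : 0 <= x <= y -> 0 <= ff J y - ff J x <= sg J 0 * (y - x).
Proof. intros. unfold ff. pose proof (ln1p_lip x y H0).
  pose proof (h_lip J HJ (ln (1 + x)) (ln (1 + y)) ltac:(lra)).
  pose proof (sg_pos J HJ 0). nra. Qed.

Lemma f_strict J (HJ : Jok J) x y : 0 <= x -> x < y -> ff J x < ff J y.
Proof. intros. unfold ff. apply h_strict; auto. apply ln_increasing; lra. Qed.

Lemma f_0 J (HJ : Jok J) : ff J 0 = 0.
Proof. unfold ff. rewrite Rplus_0_r, ln_1. apply h_0; auto. Qed.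

Lemma f_nonneg J (HJ : Jok J) x : 0 <= x -> 0 <= ff J x.
Proof. intros Hx. pose proof (f_lip J HJ 0 x ltac:(lra)) as W. rewrite f_0 in W; auto. lra. Qed.

Lemma f_conc J (HJ : Jok J) : concave_on_nonneg (ff J).
Proof. intros x y t Hx Hy Ht. unfold ff.
  eapply Rle_trans. apply h_conc; auto.
  pose proof (ln_conc x y t Hx Hy Ht) as W.
  pose proof (h_lip J HJ _ _ W). lra. Qed.

Lemma conc_subadd f : concave_on_nonneg f -> 0 <= f 0 ->
  forall x y, 0 <= x -> 0 <= y -> f (x + y) <= f x + f y.
Proof. intros Hc H0 x y Hx Hy.
  destruct (Req_dec (x + y) 0) as [E|E].
  - assert (x = 0) by lra. assert (y = 0) by lra. subst. rewrite Rplus_0_r. lra.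
  - assert (Hs : 0 < x + y) by lra.
    set (t := x / (x + y)).
    assert (Ht : 0 <= t <= 1). { unfold t; split. apply Rdiv_le_0_compat; lra.
      apply Rmult_le_reg_r with (x + y); [lra|]. unfold Rdiv. rewrite Rmult_assoc, Rinv_l by lra. lra. }
    pose proof (Hc (x + y) 0 t ltac:(lra) ltac:(lra) Ht) as A.
    replace (t * (x + y) + (1 - t) * 0) with x in A by (unfold t; field; lra).
    pose proof (Hc (x + y) 0 (1 - t) ltac:(lra) ltac:(lra) ltac:(lra)) as B.
    replace ((1 - t) * (x + y) + (1 - (1 - t)) * 0) with y in B by (unfold t; field; lra).
    nra. Qed.

Lemma f_big J (HJ : Jok J) M : exists X, 0 <= X /\ forall x, X <= x -> M < ff J x.
Proof. set (i := S (Z.to_nat (up M))).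
  exists (exp (INR (J i)) - 1). pose proof (exp_ineq1_le (INR (J i))). pose proof (pos_INR (J i)).
  split; [lra|]. intros x Hx.
  assert (E : ff J (exp (INR (J i)) - 1) = INR i).
  { unfold ff. replace (1 + (exp (INR (J i)) - 1)) with (exp (INR (J i))) by ring.
    rewrite ln_exp. apply h_J; auto. }
  assert (INR i > M) by (unfold i; rewrite S_INR; pose proof (up_nat_ge M); lra).
  pose proof (f_lip J HJ (exp (INR (J i)) - 1) x ltac:(lra)). lra. Qed.

Lemma ratio_lim (u v : R -> R) C : (forall x, 0 <= x -> Rabs (u x - v x) <= C) ->
  (forall M, exists X, forall x, X <= x -> M < v x) ->
  is_lim (fun x => u x / v x) p_infty 1.
Proof. intros HC Hv. apply is_lim_spec. intros eps.
  destruct (Hv (Rmax (C / eps) 0)) as [X HX].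
  exists (Rmax X 0). intros x Hx. pose proof (Rmax_l X 0). pose proof (Rmax_r X 0).
  specialize (HX x ltac:(lra)). pose proof (Rmax_l (C / eps) 0). pose proof (Rmax_r (C / eps) 0).
  specialize (HC x ltac:(lra)). pose proof (cond_pos eps).
  replace (u x / v x - 1) with ((u x - v x) / v x) by (field; lra).
  unfold Rdiv. rewrite Rabs_mult, Rabs_inv, (Rabs_pos_eq (v x)) by lra.
  apply Rmult_lt_reg_r with (v x); [lra|]. rewrite Rmult_assoc, Rinv_l, Rmult_1_r by lra.
  assert (C / eps * eps = C) by (field; lra). nra. Qed.

Lemma ratio_lim_seq (u v : nat -> R) C : (forall n, Rabs (u n - v n) <= C) ->
  (forall M, exists N, forall n, (N <= n)%nat -> M < v n) ->
  is_lim_seq (fun n => u n / v n) 1.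
Proof. intros HC Hv. apply is_lim_seq_spec. intros eps.
  destruct (Hv (Rmax (C / eps) 0)) as [N HN].
  exists N. intros n Hn. specialize (HN n Hn).
  pose proof (Rmax_l (C / eps) 0). pose proof (Rmax_r (C / eps) 0).
  specialize (HC n). pose proof (cond_pos eps).
  replace (u n / v n - 1) with ((u n - v n) / v n) by (field; lra).
  unfold Rdiv. rewrite Rabs_mult, Rabs_inv, (Rabs_pos_eq (v n)) by lra.
  apply Rmult_lt_reg_r with (v n); [lra|]. rewrite Rmult_assoc, Rinv_l, Rmult_1_r by lra.
  assert (C / eps * eps = C) by (field; lra). nra. Qed.

Lemma f_slow J (HJ : Jok J) : slowly_varying (ff J).
Proof. intros a Ha.
  set (C := sg J 0 * (ln (Rmax a 1) + ln (Rmax (/ a) 1))).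
  apply (ratio_lim (fun x => ff J (a * x)) (ff J) C).
  - intros x Hx. pose proof (Rmax_l a 1). pose proof (Rmax_r a 1).
    pose proof (Rmax_l (/ a) 1). pose proof (Rmax_r (/ a) 1).
    assert (0 < / a) by (apply Rinv_0_lt_compat; lra).
    assert (A1 : 1 + a * x <= Rmax a 1 * (1 + x)) by nra.
    assert (A2 : 1 + x <= Rmax (/ a) 1 * (1 + a * x)).
    { destruct (Rle_dec a 1).
      - replace (Rmax (/ a) 1 * (1 + a * x)) with (Rmax (/ a) 1 + (Rmax (/ a) 1 * a) * x) by ring.
        assert (/ a * a = 1) by (field; lra).
        assert (1 <= Rmax (/ a) 1 * a) by nra. nra.
      - assert (x <= a * x) by nra. assert (0 <= (Rmax (/ a) 1 - 1) * (1 + a * x)) by (apply Rmult_le_pos; nra). nra. }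
    assert (L1 : ln (1 + a * x) <= ln (Rmax a 1) + ln (1 + x)).
    { rewrite <- ln_mult by lra. apply ln_le; nra. }
    assert (L2 : ln (1 + x) <= ln (Rmax (/ a) 1) + ln (1 + a * x)).
    { rewrite <- ln_mult by nra. apply ln_le; nra. }
    assert (P1 : 0 <= ln (Rmax a 1)) by (rewrite <- ln_1; apply ln_le; lra).
    assert (P2 : 0 <= ln (Rmax (/ a) 1)) by (rewrite <- ln_1; apply ln_le; lra).
    pose proof (sg_pos J HJ 0).
    unfold ff. destruct (Rle_dec (ln (1 + x)) (ln (1 + a * x))).
    + pose proof (h_lip J HJ _ _ r). rewrite Rabs_pos_eq by lra. unfold C. nra.
    + pose proof (h_lip J HJ (ln (1 + a * x)) (ln (1 + x)) ltac:(lra)).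
      rewrite Rabs_minus_sym, Rabs_pos_eq by lra. unfold C. nra.
  - intros M. destruct (f_big J HJ M) as [X [_ HX]]. exists X. exact HX.
Qed.

Lemma f_cont J (HJ : Jok J) x : 0 <= x ->
  filterlim (ff J) (within (fun y => 0 <= y) (locally x)) (locally (ff J x)).
Proof. intros Hx. apply filterlim_locally. intros eps.
  pose proof (sg_pos J HJ 0). pose proof (cond_pos eps).
  assert (Hd : 0 < eps / (sg J 0 + 1)) by (apply Rdiv_lt_0_compat; lra).
  exists (mkposreal _ Hd). intros y Hy Hy0.
  change (Rabs (y - x) < eps / (sg J 0 + 1)) in Hy.
  change (Rabs (ff J y - ff J x) < eps).
  assert (sg J 0 * Rabs (y - x) < eps).
  { apply Rle_lt_trans with ((sg J 0 + 1) * Rabs (y - x)). pose proof (Rabs_pos (y - x)). nra.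
    apply Rmult_lt_reg_r with (/ (sg J 0 + 1)). apply Rinv_0_lt_compat; lra.
    rewrite (Rmult_comm (sg J 0 + 1)), Rmult_assoc, Rinv_r, Rmult_1_r by lra. exact Hy. }
  destruct (Rle_dec x y).
  - pose proof (f_lip J HJ x y ltac:(lra)). rewrite Rabs_pos_eq in * by lra. nra.
  - pose proof (f_lip J HJ y x ltac:(lra)). rewrite Rabs_minus_sym in *. rewrite Rabs_pos_eq in * by lra. nra.
Qed.

Lemma f_modulus J (HJ : Jok J) : is_modulus (ff J).
Proof. split; [|split; [|split; [|split]]].
  - apply f_nonneg; auto.
  - intros x Hx. split.
    + intros E. destruct (Req_dec x 0) as [|Hn]; auto. pose proof (f_strict J HJ 0 x ltac:(lra) ltac:(lra)) as W.
      rewrite f_0 in W; auto. lra.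
    + intros ->. apply f_0; auto.
  - apply conc_subadd. apply f_conc; auto. rewrite f_0; auto. lra.
  - intros. apply f_strict; auto.
  - apply f_cont; auto.
Qed.

Lemma f_unb J (HJ : Jok J) : unbounded_on_nonneg (ff J).
Proof. intros M. destruct (f_big J HJ M) as [X [HX0 HX]]. exists X. split; auto. apply HX. lra. Qed.

Lemma find_block J (HJ : Jok J) t : 0 <= t -> exists i, INR (J i) <= t < INR (J (S i)).
Proof. intros Ht.
  assert (G0 : forall n, t < INR (J n) -> exists i, INR (J i) <= t < INR (J (S i))).
  { induction n; intros Hn.
    - rewrite (proj1 HJ) in Hn. simpl in Hn. lra.
    - destruct (Rlt_dec t (INR (J n))); auto. exists n. lra. }
  apply (G0 (S (Z.to_nat (up t)))). pose proof (up_nat_ge t).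
  pose proof (J_ge J HJ (S (Z.to_nat (up t)))). apply le_INR in H1. rewrite S_INR in H1. lra.
Qed.

Lemma dens_key J (HJ : Jok J) t T : 0 <= t ->
  (forall i, INR (J (S (S i))) <= T -> INR (J (S i)) <= t) -> hh J T <= hh J t + 2.
Proof. intros Ht Hk. destruct (find_block J HJ t Ht) as [i [Hi1 Hi2]].
  assert (T < INR (J (S (S i)))). { destruct (Rlt_dec T (INR (J (S (S i))))); auto. specialize (Hk i ltac:(lra)). lra. }
  pose proof (h_lip J HJ T (INR (J (S (S i)))) ltac:(lra)).
  pose proof (h_lip J HJ (INR (J i)) t Hi1).
  rewrite !h_J in *; auto. rewrite !S_INR in *. lra. Qed.

Lemma count_step K n : (count_upto K n <= count_upto K (S n))%nat.
Proof. simpl. lia. Qed.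

Lemma count_mono K n m : (n <= m)%nat -> (count_upto K n <= count_upto K m)%nat.
Proof. induction 1; auto. pose proof (count_step K m). lia. Qed.

Lemma count_le K n : (count_upto K n <= S n)%nat.
Proof. induction n; simpl. destruct (K 0%nat); lia. destruct (K (S n)); lia. Qed.

Lemma count_hit K k : K k = true -> (1 <= count_upto K k)%nat.
Proof. destruct k; simpl; intros ->; lia. Qed.

Lemma count_hit2 K n k : (n < k)%nat -> K k = true -> (S (count_upto K n) <= count_upto K k)%nat.
Proof. destruct k; [lia|]. intros Hl Hk. simpl. rewrite Hk. pose proof (count_mono K n k ltac:(lia)). lia. Qed.

Lemma count_unb K (HK : infinite_set K) M : exists n, (M <= count_upto K n)%nat.
Proof. induction M. exists 0%nat; lia.
  destruct IHM as [n Hn]. destruct (HK (S n)) as [k [Hk1 Hk2]].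
  exists k. pose proof (count_hit2 K n k ltac:(lia) Hk2). lia. Qed.

Lemma count_thr K (HK : infinite_set K) (b : nat) : exists n0, forall m, (n0 <= m)%nat -> exp (INR b) <= INR (count_upto K m).
Proof. destruct (count_unb K HK (Z.to_nat (up (exp (INR b))))) as [n Hn].
  exists n. intros m Hm. pose proof (count_mono K n m Hm). pose proof (up_nat_ge (exp (INR b))).
  assert (INR (Z.to_nat (up (exp (INR b)))) <= INR (count_upto K m)) by (apply le_INR; lia). lra. Qed.

Fixpoint Jseq (E : nat -> nat) i := match i with O => O | S k => E (Jseq E k) end.

Theorem lemma2p5 (K : nat -> bool) (HK : infinite_set K) :
  exists f : R -> R,
    is_modulus f /\ unbounded_on_nonneg f /\ concave_on_nonneg f /\
    slowly_varying f /\ f_density_is f K 1.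
Proof.
  set (Nb := fun b => proj1_sig (constructive_indefinite_description _ (count_thr K HK b))).
  assert (HNb : forall b m, (Nb b <= m)%nat -> exp (INR b) <= INR (count_upto K m)).
  { intros b. unfold Nb. destruct (constructive_indefinite_description _ (count_thr K HK b)). simpl. auto. }
  set (E := fun b => Nat.max (2 * b + 1) (Nb b)).
  set (J := Jseq E).
  assert (HJ : Jok J). { split; auto. intros i. unfold J; simpl. unfold E. lia. }
  exists (ff J). split; [|split; [|split; [|split]]].
  - apply f_modulus; auto.
  - apply f_unb; auto.
  - apply f_conc; auto.
  - apply f_slow; auto.
  - unfold f_density_is. apply (ratio_lim_seq _ _ (sg J 0 + 2)).
    + intros n. set (c := count_upto K n).
      pose proof (pos_INR n). pose proof (pos_INR c). pose proof (sg_pos J HJ 0).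
      assert (U : ff J (INR c) <= ff J (INR n) + sg J 0).
      { assert (INR c <= INR n + 1) by (rewrite <- S_INR; apply le_INR; apply count_le).
        pose proof (f_lip J HJ (INR c) (INR n + 1) ltac:(lra)).
        pose proof (f_lip J HJ (INR n) (INR n + 1) ltac:(lra)). nra. }
      assert (V : ff J (INR n) <= ff J (INR c) + 2).
      { unfold ff. apply dens_key; auto. apply ln1p_nonneg; auto.
        intros i Hi. change (J (S (S i))) with (E (J (S i))) in Hi.
        set (b := J (S i)) in *.
        assert (Hb : INR (Nb b) <= INR n).
        { assert (INR (Nb b) <= INR (E b)) by (apply le_INR; unfold E; lia).
          pose proof (ln_le_m1 (1 + INR n) ltac:(lra)). lra. }
        apply INR_le in Hb. pose proof (HNb b n Hb) as Hc. fold c in Hc.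
        rewrite <- (ln_exp (INR b)). eapply Rle_trans. apply ln_le. apply exp_pos. exact Hc.
        pose proof (exp_pos (INR b)). apply ln_le; lra. }
      apply Rabs_le. lra.
    + intros M. destruct (f_big J HJ M) as [X [HX0 HX]].
      exists (Z.to_nat (up X)). intros n Hn. apply HX. pose proof (up_nat_ge X).
      apply le_INR in Hn. lra.
Qed.
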